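(* Let $n,t$ be positive integers, $\sigma\in(0,1]$ with $\sigma n$ an integer, and $\alpha>0$ such that $k=\alpha/\sigma$ is a positive integer. For each $j\in[t]$ let $S_j$ be a map assigning to each $(x_1,\dots,x_{j-1})\in[n]^{j-1}$ a subset $S_j(x_1,\dots,x_{j-1})\subseteq[n]$ of size $\sigma n$; the associated adaptive sequence $\mathfrak{D}$ draws $X_j$ uniformly from $S_j(X_1,\dots,X_{j-1})$ for $j=1,\dots,t$. Construct $(X_1,Z_1^{(1)},\dots,Z_k^{(1)},\dots,X_t,Z_1^{(t)},\dots,Z_k^{(t)})$ as follows: for $j=1,\dots,t$, draw $Y_1^{(j)},\dots,Y_k^{(j)}$ independently and uniformly from $[n]$; for each $i$ with $Y_i^{(j)}\notin S_j(X_1,\dots,X_{j-1})$ set $Z_i^{(j)}=Y_i^{(j)}$; for each $i$ with $Y_i^{(j)}\in S_j(X_1,\dots,X_{j-1})$ draw $\tilde W_i^{(j)}$ uniformly and independently from $S_j(X_1,\dots,X_{j-1})$ and set $Z_i^{(j)}=\tilde W_i^{(j)}$; if some $Y_i^{(j)}\in S_j(X_1,\dots,X_{j-1})$, let $X_j$ be chosen uniformly at random among the drawn $\tilde W_i^{(j)}$, and otherwise draw $X_j$ uniformly from $S_j(X_1,\dots,X_{j-1})$ independently. Then: (a) $X_1,\dots,X_t$ is distributed according to $\mathfrak{D}$; (b) each $Z_i^{(j)}$ is uniformly distributed on $[n]$; (c) the $Z_i^{(j)}$ ($i\in[k]$, $j\in[t]$) are all mutually independent; (d) with probability at least $1-t(1-\sigma)^{\alpha/\sigma}$,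 $\{X_1,\dots,X_t\}\subseteq\{Z_i^{(j)} : i\in[k],\ j\in[t]\}$. *)

(* Defs.v *)
From HB Require Import structures.
From mathcomp Require Import all_boot all_order all_algebra.
Set Implicit Arguments. Unset Strict Implicit. Unset Printing Implicit Defensive.
Import Order.TTheory GRing.Theory Num.Theory.
Local Open Scope ring_scope.

(* Elements of [n] are 'I_n (0-based); steps j = 0..t-1 (0-based).
   The randomness used at one step j:
     Y   : 'I_k -> 'I_n   (the Y_i^{(j)}, uniform on [n]^k)
     W   : 'I_k -> 'I_n   (the tilde W_i^{(j)}, uniform on S^k; W_i is only
                           used when Y_i \in S, so drawing all of them
                           independently is the same as drawing only those)
     c   : 'I_k           (the uniformly chosen index among {i | Y_i \in S}
                           when that set is nonempty; irrelevant otherwise)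
     f   : 'I_n           (the fallback X_j, uniform on S; used only when no
                           Y_i lies in S). *)
Definition step (n k : nat) :=
  ({ffun 'I_k -> 'I_n} * {ffun 'I_k -> 'I_n} * 'I_k * 'I_n)%type.

Section Coupling.
Variables (n k : nat).

Definition stY (w : step n k) : {ffun 'I_k -> 'I_n} := w.1.1.1.
Definition stW (w : step n k) : {ffun 'I_k -> 'I_n} := w.1.1.2.
Definition stc (w : step n k) : 'I_k := w.1.2.
Definition stf (w : step n k) : 'I_n := w.2.

Definition xstep (A : {set 'I_n}) (w : step n k) : 'I_n :=
  if [exists i, stY w i \in A] then stW w (stc w) else stf w.

Definition zstep (A : {set 'I_n}) (w : step n k) (i : 'I_k) : 'I_n :=
  if stY w i \in A then stW w i else stY w i.

Definition stepw (R : realFieldType) (A : {set 'I_n}) (w : step n k) : R :=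
  let H := [set i | stY w i \in A] in
  (n%:R^-1) ^+ k
  * (if [forall i, stW w i \in A] then (#|A|%:R^-1) ^+ k else 0)
  * (if H != set0 then (if stc w \in H then (#|H|%:R)^-1 else 0)
     else k%:R^-1)
  * (if stf w \in A then #|A|%:R^-1 else 0).

Variables (t : nat) (S : nat -> seq 'I_n -> {set 'I_n}).
(* S j h = S_{j+1}(h) for a history h of length j *)

Definition Xseq (ws : seq (step n k)) : seq 'I_n :=
  foldl (fun h w => rcons h (xstep (S (size h) h) w)) [::] ws.

Definition hist (om : t.-tuple (step n k)) (j : nat) : seq 'I_n :=
  take j (Xseq om).

Definition Xof (om : t.-tuple (step n k)) (j : 'I_t) : 'I_n :=
  xstep (S j (hist om j)) (tnth om j).

Definition Zof (om : t.-tuple (step n k)) (j : 'I_t) (i : 'I_k) : 'I_n :=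
  zstep (S j (hist om j)) (tnth om j) i.

Definition weight (R : realFieldType) (om : t.-tuple (step n k)) : R :=
  \prod_(j < t) stepw R (S j (hist om j)) (tnth om j).

Definition Pr (R : realFieldType) (E : pred (t.-tuple (step n k))) : R :=
  \sum_(om : t.-tuple (step n k) | E om) weight R om.

Definition adaptive_pmf (R : realFieldType) (x : t.-tuple 'I_n) : R :=
  \prod_(j < t) (if tnth x j \in S j (take j x)
                 then #|S j (take j x)|%:R^-1 else 0).

End Coupling.

(* Main.v *)
Require Import Defs.
From HB Require Import structures.
From mathcomp Require Import all_boot all_order all_algebra.
From mathcomp Require Import ring lra.
Import Order.TTheory GRing.Theory Num.Theory.
Local Open Scope ring_scope.

Set Implicit Arguments. Unset Strict Implicit. Unset Printing Implicit Defensive.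

Section Gen.
Variable R : realFieldType.

Lemma sum_tuple_rcons (T : finType) t (F : t.+1.-tuple T -> R) :
  \sum_(s : t.+1.-tuple T) F s =
  \sum_(p : t.-tuple T) \sum_(w : T) F [tuple of rcons p w].
Proof.
rewrite pair_bigA /=.
pose h := fun q : t.-tuple T * T => [tuple of rcons q.1 q.2].
rewrite (reindex h) //.
exists (fun s : t.+1.-tuple T =>
  ([tuple of belast (thead s) (behead s)], last (thead s) (behead s))).
- case=> p w _; rewrite /h /=.
  have E : thead [tuple of rcons p w] :: behead [tuple of rcons p w] = rcons p w.
    by move: (congr1 val (tuple_eta [tuple of rcons p w])) => /= <-.
  congr pair; last first.
    by rewrite -(last_cons w) E last_rcons.
  apply: val_inj => /=.
  have Hh : thead [tuple of rcons p w] = head w (rcons p w) by rewrite /thead (tnth_nth w).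
  rewrite Hh /=; case: (tval p) => [|x q] //=.
  by rewrite belast_rcons.
- move=> s _; rewrite /h /=; apply: val_inj => /=.
  by rewrite -lastI [in RHS](tuple_eta s).
Qed.

Lemma prod_if (I : finType) (e : I -> bool) (G : I -> R) :
  \prod_i (if e i then G i else 0) = if [forall i, e i] then \prod_i G i else 0.
Proof.
case: forallP => [He|Hn].
  by apply: eq_bigr => i _; rewrite He.
have [i Hi] : exists i, ~~ e i.
  by apply/existsP; move: Hn => /forallP; rewrite negb_forall.
by rewrite (bigD1 i) //= (negbTE Hi) mul0r.
Qed.

Lemma chain (T : finType) t (F : nat -> seq T -> T -> R) (c : nat -> R) :
  (forall j (p : j.-tuple T), (j < t)%N ->
     \prod_(i < j) F i (take i p) (tnth p i) != 0 ->
     \sum_w F j p w = c j) ->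
  \sum_(s : t.-tuple T) \prod_(j < t) F j (take j s) (tnth s j) = \prod_(j < t) c j.
Proof.
elim: t => [|t IH] H.
  rewrite big_ord0 (big_pred1 [tuple]) ?big_ord0 // => s.
  by apply/esym/eqP; exact: tuple0.
rewrite sum_tuple_rcons big_ord_recr /= -IH; last first.
  by move=> j p jt; apply: H; apply: ltnW.
rewrite mulr_suml; apply: eq_bigr => p _.
have E : forall w, \prod_(j < t.+1) F j (take j [tuple of rcons p w]) (tnth [tuple of rcons p w] j)
   = (\prod_(j < t) F j (take j p) (tnth p j)) * F t p w.
  move=> w; rewrite big_ord_recr /=; congr (_ * _).
    apply: eq_bigr => j _ /=.
    rewrite (tnth_nth (tnth p j)) /= -cats1 takel_cat ?size_tuple 1?ltnW //.
    by rewrite nth_cat size_tuple ltn_ord -tnth_nth.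
  rewrite (tnth_nth w) /= -cats1 take_size_cat ?size_tuple //.
  by rewrite nth_cat size_tuple ltnn subnn.
under eq_bigr do rewrite E.
rewrite -mulr_sumr.
have [->|nz] := eqVneq (\prod_(j < t) F j (take j p) (tnth p j)) 0.
  by rewrite !mul0r.
by rewrite (H t p (ltnSn t) nz).
Qed.

End Gen.

Section Step.
Variables (R : realFieldType) (n k : nat) (A : {set 'I_n}).
Hypotheses (n0 : (0 < n)%N) (k0 : (0 < k)%N) (A0 : (0 < #|A|)%N).

Lemma nR0 : (n%:R : R) != 0. Proof. by rewrite pnatr_eq0 -lt0n. Qed.
Lemma aR0 : (#|A|%:R : R) != 0. Proof. by rewrite pnatr_eq0 -lt0n. Qed.

Lemma invn_mul (m : nat) : (0 < m)%N -> m%:R^-1 *+ m = 1 :> R.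
Proof. by move=> m0; rewrite -[LHS]mulr_natr mulVf // pnatr_eq0 -lt0n. Qed.

Lemma sum_ind (T : finType) (B : {set T}) : (0 < #|B|)%N ->
  \sum_x (if x \in B then #|B|%:R^-1 else 0) = 1 :> R.
Proof.
by move=> B0; rewrite -big_mkcond /= sumr_const invn_mul.
Qed.

Lemma sum_cinv (T : finType) (m : nat) : #|T| = m -> (0 < m)%N ->
  \sum_(x : T) m%:R^-1 = 1 :> R.
Proof.
by move=> Tm m0; rewrite sumr_const Tm invn_mul.
Qed.

Lemma sum_step (F : step n k -> R) :
  \sum_w F w = \sum_(Y : {ffun 'I_k -> 'I_n}) \sum_(W : {ffun 'I_k -> 'I_n}) \sum_(c : 'I_k) \sum_(f : 'I_n) F (Y, W, c, f).
Proof.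
rewrite !pair_bigA; apply: eq_bigr; by case=> [[[Y W] c] f].
Qed.

Definition WAi (v : 'I_n) : R := if v \in A then #|A|%:R^-1 else 0.

Lemma WA_prod (W : {ffun 'I_k -> 'I_n}) :
  (if [forall i, W i \in A] then (#|A|%:R^-1) ^+ k else 0) = \prod_i WAi (W i).
Proof.
rewrite /WAi prod_if; case: ifP => // _.
by rewrite prodr_const card_ord.
Qed.

Lemma marg (G : {ffun 'I_k -> 'I_n} -> {ffun 'I_k -> 'I_n} -> R) :
  \sum_w stepw R A w * G (stY w) (stW w) =
  \sum_(Y : {ffun 'I_k -> 'I_n}) \sum_(W : {ffun 'I_k -> 'I_n}) (n%:R^-1) ^+ k * \prod_i WAi (W i) * G Y W.
Proof.
rewrite sum_step; apply: eq_bigr => Y _; apply: eq_bigr => W _.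
rewrite /stepw /stY /stW /stc /stf /= -WA_prod.
set X := _ * _.
set H := [set i | Y i \in A].
have -> : \sum_c \sum_f
   X * (if H != set0 then if c \in H then (#|H|%:R)^-1 else 0 else k%:R^-1) *
   (if f \in A then (#|A|%:R)^-1 else 0) * G Y W
   = X * G Y W * ((\sum_c (if H != set0 then if c \in H then (#|H|%:R)^-1 else 0 else k%:R^-1)) *
      \sum_f (if f \in A then (#|A|%:R)^-1 else 0)).
  rewrite mulr_suml mulr_sumr; apply: eq_bigr => c _.
  rewrite mulr_sumr mulr_sumr; apply: eq_bigr => f _.
  by rewrite -!mulrA [G Y W * _]mulrC -mulrA.
rewrite sum_ind // mulr1.
have [HP|HP] := boolP (H != set0).
  by rewrite sum_ind ?mulr1 // card_gt0.
by rewrite (sum_cinv (card_ord k)) ?mulr1.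
Qed.

Lemma prodsum (g : 'I_k -> 'I_n -> 'I_n -> R) :
  \sum_w stepw R A w * \prod_i g i (stY w i) (stW w i) =
  \prod_i \sum_y \sum_v n%:R^-1 * WAi v * g i y v.
Proof.
rewrite (marg (fun Y W => \prod_i g i (Y i) (W i))).
have -> : (n%:R^-1) ^+ k = \prod_(i < k) n%:R^-1 :> R by rewrite prodr_const card_ord.
rewrite (eq_bigr (fun Y : {ffun 'I_k -> 'I_n} => \prod_i \sum_v (n%:R^-1 * WAi v * g i (Y i) v))).
  by rewrite (bigA_distr_bigA (fun (i : 'I_k) (y : 'I_n) => \sum_v n%:R^-1 * WAi v * g i y v)).
move=> Y _; rewrite (bigA_distr_bigA (fun (i : 'I_k) (v : 'I_n) => n%:R^-1 * WAi v * g i (Y i) v)).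
by apply: eq_bigr => W _; rewrite -!big_split.
Qed.

Lemma sumWA : \sum_v WAi v = 1.
Proof. exact: sum_ind. Qed.

Lemma zsum (phi : 'I_n -> R) :
  \sum_y \sum_v n%:R^-1 * WAi v * phi (if y \in A then v else y) =
  n%:R^-1 * \sum_u phi u.
Proof.
rewrite (bigID (mem A)) /= [in RHS](bigID (mem A)) /= mulrDr; congr (_ + _).
  rewrite (eq_bigr (fun _ => \sum_v n%:R^-1 * WAi v * phi v)); last first.
    by move=> y ->.
  rewrite sumr_const -[LHS]mulr_natr mulr_suml mulr_sumr /=.
  rewrite [RHS]big_mkcond; apply: eq_bigr => v _; rewrite /WAi; case: ifP => vA.
    by field; rewrite nR0 aR0.
  by rewrite mulr0 !mul0r.
rewrite mulr_sumr; apply: eq_bigr => y /negbTE yA.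
rewrite yA -mulr_suml -mulr_sumr sumWA mulr1 //.
Qed.

Lemma zprod (phi : 'I_k -> 'I_n -> R) :
  \sum_w stepw R A w * \prod_i phi i (zstep A w i) =
  \prod_i (n%:R^-1 * \sum_u phi i u).
Proof.
have E := prodsum (fun i y v => phi i (if y \in A then v else y)).
cbv beta in E; rewrite /zstep E; apply: eq_bigr => i _; exact: zsum.
Qed.

Lemma sumn1 : n%:R^-1 * \sum_(u : 'I_n) 1 = 1 :> R.
Proof.
by rewrite sumr_const card_ord mulVf // nR0.
Qed.

Lemma step_total : \sum_(w : step n k) stepw R A w = 1.
Proof.
have E := zprod (fun _ _ => 1).
cbv beta in E.
rewrite [X in _ = X]big1 in E; last by move=> i _; exact: sumn1.
by rewrite -E; apply: eq_bigr => w _; rewrite big1_eq mulr1.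
Qed.


Lemma sum_eq1 (T : finType) (x0 : T) : \sum_(u : T) (if u == x0 then 1 else 0) = 1 :> R.
Proof. by rewrite -big_mkcond big_pred1_eq. Qed.

Lemma step_z1 (i0 : 'I_k) (v0 : 'I_n) :
  \sum_(w : step n k) (if zstep A w i0 == v0 then stepw R A w else 0) = n%:R^-1.
Proof.
pose phi := fun (i : 'I_k) (u : 'I_n) => if i == i0 then (if u == v0 then 1 else 0) else 1 : R.
have E := zprod phi.
have P : \prod_i (n%:R^-1 * \sum_u phi i u) = n%:R^-1.
  rewrite (bigD1 i0) //= [\prod_(i | i != i0) _]big1 ?mulr1.
    by rewrite /phi eqxx sum_eq1 mulr1.
  by move=> i /negbTE ii0; rewrite /phi ii0 sumn1.
rewrite P in E; rewrite -E; apply: eq_bigr => w _.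
rewrite (bigD1 i0) //= [\prod_(i | i != i0) _]big1 ?mulr1; last first.
  by move=> i /negbTE ii0; rewrite /phi ii0.
by rewrite /phi eqxx; case: ifP; rewrite ?mulr1 ?mulr0.
Qed.

Lemma step_zall (z : 'I_k -> 'I_n) :
  \sum_(w : step n k) (if [forall i, zstep A w i == z i] then stepw R A w else 0)
  = n%:R^-1 ^+ k.
Proof.
pose phi := fun (i : 'I_k) (u : 'I_n) => if u == z i then 1 else 0 : R.
have E := zprod phi.
have P : \prod_i (n%:R^-1 * \sum_u phi i u) = n%:R^-1 ^+ k.
  rewrite (eq_bigr (fun _ => n%:R^-1)) ?prodr_const ?card_ord //.
  by move=> i _; rewrite /phi sum_eq1 mulr1.
rewrite P in E; rewrite -E; apply: eq_bigr => w _.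
rewrite /phi prod_if; case: ifP; rewrite ?mulr0 // => _.
by rewrite big1_eq mulr1.
Qed.

Lemma step_bad :
  \sum_(w : step n k) (if stY w (stc w) \notin A then stepw R A w else 0)
  = (n%:R^-1 * (n - #|A|)%:R) ^+ k.
Proof.
pose g := fun (i : 'I_k) (y v : 'I_n) => if y \notin A then 1 else 0 : R.
have E := prodsum g.
have P : \prod_i \sum_y \sum_v n%:R^-1 * WAi v * g i y v = (n%:R^-1 * (n - #|A|)%:R) ^+ k.
  rewrite (eq_bigr (fun _ => n%:R^-1 * (n - #|A|)%:R)) ?prodr_const ?card_ord // => i _.
  rewrite (eq_bigr (fun y => n%:R^-1 * (if y \in ~: A then 1 else 0))); last first.
    by move=> y _; rewrite /g -mulr_suml -mulr_sumr sumWA mulr1 inE.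
  rewrite -mulr_sumr -big_mkcond /= sumr_const.
  have -> : #|~: A| = (n - #|A|)%N by rewrite -[X in (X - _)%N](card_ord n) -(cardsC A) addKn.
  by [].
rewrite P in E; rewrite -E; apply: eq_bigr => w _.
rewrite /g prod_if big1_eq.
case: ifP => Yc; case: ifP => Hn; rewrite ?mulr1 ?mulr0 //.
  have : ~~ [forall i, stY w i \notin A] by rewrite Hn.
  rewrite negb_forall => /existsP [i]; rewrite negbK => Yi.
  rewrite /stepw; set H := [set i | stY w i \in A].
  have HP : H != set0 by apply/set0Pn; exists i; rewrite inE.
  have cH : stc w \notin H by rewrite inE.
  by rewrite HP (negbTE cH) mulr0 mul0r.
by move/forallP: Hn => /(_ (stc w)); rewrite Yc.
Qed.

Lemma sumY : \sum_(Y : {ffun 'I_k -> 'I_n}) n%:R^-1 ^+ k = 1 :> R.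
Proof.
rewrite sumr_const card_ffun !card_ord -[LHS]mulr_natr natrX -exprMn mulVf ?expr1n //.
exact: nR0.
Qed.

Lemma sumW_all : \sum_(W : {ffun 'I_k -> 'I_n}) \prod_i WAi (W i) = 1.
Proof.
have E := bigA_distr_bigA (fun (i : 'I_k) (v : 'I_n) => WAi v); cbv beta in E.
by rewrite -E big1 // => i _; exact: sumWA.
Qed.

Lemma sumW_c (c : 'I_k) (x : 'I_n) :
  \sum_(W : {ffun 'I_k -> 'I_n}) (if W c == x then \prod_i WAi (W i) else 0) = WAi x.
Proof.
have E := bigA_distr_bigA
  (fun (i : 'I_k) (v : 'I_n) => if i == c then (if v == x then WAi v else 0) else WAi v).
cbv beta in E.
rewrite (eq_bigr (fun W : {ffun 'I_k -> 'I_n} => \prod_i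
   (if i == c then (if W i == x then WAi (W i) else 0) else WAi (W i)))); last first.
  move=> W _; rewrite [RHS](bigD1 c) //= eqxx.
  rewrite [in RHS](eq_bigr (fun i => WAi (W i))); last by move=> i /negbTE ->.
  rewrite [in LHS](bigD1 c) //=; case: ifP => _ //; by rewrite mul0r.
rewrite -E (bigD1 c) //= eqxx.
rewrite [\prod_(i | i != c) _](eq_bigr (fun i => 1)); last first.
  by move=> i /negbTE ->; exact: sumWA.
rewrite big1_eq mulr1 -big_mkcond /=.
by rewrite (big_pred1 x) // => v; rewrite eq_sym.
Qed.

Lemma step_x (x : 'I_n) :
  \sum_(w : step n k) (if xstep A w == x then stepw R A w else 0) = WAi x.
Proof.
rewrite sum_step -[RHS]mul1r -sumY mulr_suml; apply: eq_bigr => Y _.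
rewrite /xstep /stepw /stY /stW /stc /stf /=.
set H := [set i | Y i \in A].
have EH : (H != set0) = [exists i, Y i \in A].
  apply/set0Pn/existsP => -[i]; rewrite ?inE => Hi; exists i; rewrite ?inE //.
rewrite -EH.
under eq_bigr => W _ do rewrite WA_prod.
set nk := n%:R^-1 ^+ k.
case: (boolP (H != set0)) => HP.
  transitivity (\sum_(W : {ffun 'I_k -> 'I_n}) \sum_(c : 'I_k)
      nk * (if W c == x then \prod_i WAi (W i) else 0) * (if c \in H then #|H|%:R^-1 else 0)).
    apply: eq_bigr => W _; apply: eq_bigr => c _.
    rewrite -[X in _ = X]mulr1 -[X in _ = _ * X](sum_ind A0) mulr_sumr.
    apply: eq_bigr => f _.
    by case: ifP => _; rewrite ?mulr0 ?mul0r.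
  rewrite exchange_big /=.
  transitivity (\sum_(c : 'I_k) nk * WAi x * (if c \in H then #|H|%:R^-1 else 0)).
    apply: eq_bigr => c _; rewrite -(sumW_c c) mulr_sumr mulr_suml.
    by apply: eq_bigr => W _.
  by rewrite -mulr_sumr sum_ind ?mulr1 // card_gt0.
transitivity (\sum_(W : {ffun 'I_k -> 'I_n}) \sum_(c : 'I_k)
      nk * \prod_i WAi (W i) * k%:R^-1 * WAi x).
  apply: eq_bigr => W _; apply: eq_bigr => c _.
  rewrite -big_mkcond /= (big_pred1 x) // => v; by rewrite eq_sym.
rewrite -[X in _ = X]mulr1 -[X in _ = _ * X]sumW_all mulr_sumr; apply: eq_bigr => W _.
rewrite sumr_const card_ord -[LHS]mulr_natr.
have kR0 : (k%:R : R) != 0 by rewrite pnatr_eq0 -lt0n.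
by field.
Qed.

End Step.
Section XS.
Variables (n k : nat) (S : nat -> seq 'I_n -> {set 'I_n}).

Definition fX (h : seq 'I_n) (w : step n k) := rcons h (xstep (S (size h) h) w).

Lemma XseqE (s : seq (step n k)) : Xseq S s = foldl fX [::] s.
Proof. by []. Qed.

Lemma foldl_fX s h :
  take (size h) (foldl fX h s) = h /\ size (foldl fX h s) = (size h + size s)%N.
Proof.
elim: s h => [|w s IH] h /=; first by rewrite take_size addn0.
case: (IH (fX h w)); rewrite /fX size_rcons => H1 H2; split.
  by rewrite -(take_takel _ (leqnSn (size h))) H1 -cats1 take_size_cat.
by rewrite H2 addSnnS.
Qed.

Lemma size_Xseq (s : seq (step n k)) : size (Xseq S s) = size s.
Proof. have [_ H] := foldl_fX s [::]; exact: H. Qed.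

Lemma Xseq_cat (s1 s2 : seq (step n k)) : Xseq S (s1 ++ s2) = foldl fX (Xseq S s1) s2.
Proof. exact: (foldl_cat fX [::] s1 s2). Qed.

Lemma Xseq_take j (s : seq (step n k)) : Xseq S (take j s) = take j (Xseq S s).
Proof.
case: (leqP (size s) j) => hj.
  rewrite (take_oversize hj).
  have h2 : (size (Xseq S s) <= j)%N by rewrite size_Xseq.
  by rewrite (take_oversize h2).
have [H1 _] := foldl_fX (drop j s) (Xseq S (take j s)).
have E : size (Xseq S (take j s)) = j by rewrite size_Xseq size_takel // ltnW.
rewrite E in H1.
have E2 : Xseq S s = foldl fX (Xseq S (take j s)) (drop j s).
  by rewrite -Xseq_cat cat_take_drop.
by rewrite [in RHS]E2 H1.
Qed.

Lemma nth_Xseq (s : seq (step n k)) i x0 (w0 : step n k) : (i < size s)%N ->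
  nth x0 (Xseq S s) i = xstep (S i (Xseq S (take i s))) (nth w0 s i).
Proof.
move=> hi.
have E1 : nth x0 (Xseq S s) i = nth x0 (take i.+1 (Xseq S s)) i by rewrite nth_take.
have E2 : take i.+1 (Xseq S s) = fX (Xseq S (take i s)) (nth w0 s i).
  by rewrite -Xseq_take (take_nth w0 hi) -cats1 Xseq_cat.
have E3 : size (Xseq S (take i s)) = i by rewrite size_Xseq size_takel // ltnW.
rewrite E1 E2 /fX nth_rcons E3 ltnn eqxx.
by [].
Qed.

End XS.

Lemma stepw_ge0 (R : realFieldType) n k (A : {set 'I_n}) (w : step n k) :
  0 <= stepw R A w.
Proof.
have h1 : forall m : nat, 0 <= (m%:R : R)^-1 by move=> m; rewrite invr_ge0 ler0n.
rewrite /stepw; apply: mulr_ge0; [apply: mulr_ge0; [apply: mulr_ge0|]|].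
- exact: exprn_ge0.
- case: ifP => _ //; exact: exprn_ge0.
- case: ifP => _; last exact: h1.
  by case: ifP => _.
- by case: ifP => _.
Qed.


Lemma weight_ge0 (R : realFieldType) n k t S (om : t.-tuple (step n k)) :
  0 <= weight S R om.
Proof. by apply: prodr_ge0 => j _; exact: stepw_ge0. Qed.

Section Main.
Variables (R : realFieldType) (n k t m : nat) (S : nat -> seq 'I_n -> {set 'I_n}).
Hypotheses (n0 : (0 < n)%N) (k0 : (0 < k)%N) (m0 : (0 < m)%N)
  (HS : forall (j : nat) (h : seq 'I_n), (j < t)%N -> size h = j -> #|S j h| = m).

Definition G j (p : seq (step n k)) (w : step n k) := stepw R (S j (Xseq S p)) w.

Lemma weightE (om : t.-tuple (step n k)) :
  weight S R om = \prod_(j < t) G j (take j om) (tnth om j).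
Proof. by apply: eq_bigr => j _; rewrite /G /hist -Xseq_take. Qed.

Lemma card_A j (p : j.-tuple (step n k)) : (j < t)%N -> #|S j (Xseq S p)| = m.
Proof. by move=> jt; apply: HS => //; rewrite size_Xseq size_tuple. Qed.

Lemma cardA0 j (p : j.-tuple (step n k)) : (j < t)%N -> (0 < #|S j (Xseq S p)|)%N.
Proof. by move=> jt; rewrite card_A. Qed.

Lemma chainPr (E : pred (t.-tuple (step n k)))
   (e : nat -> seq (step n k) -> step n k -> bool) (c : nat -> R) :
  (forall j (p : j.-tuple (step n k)), (j < t)%N ->
     [forall i : 'I_j, e i (take i p) (tnth p i)] ->
     \sum_w (if e j p w then G j p w else 0) = c j) ->
  (forall om, E om = [forall j : 'I_t, e j (take j om) (tnth om j)]) ->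
  Pr S R E = \prod_(j < t) c j.
Proof.
move=> H HE.
have -> : Pr S R E = \sum_(om : t.-tuple (step n k)) \prod_(j < t)
    (if e j (take j om) (tnth om j) then G j (take j om) (tnth om j) else 0).
  rewrite /Pr big_mkcond; apply: eq_bigr => om _.
  by rewrite prod_if HE weightE.
apply: (chain (F := fun j p w => if e j p w then G j p w else 0)).
move=> j p jt; rewrite prod_if; case: ifP => [Hall _|_]; last by rewrite eqxx.
exact: H.
Qed.

Lemma total : \sum_(om : t.-tuple (step n k)) weight S R om = 1.
Proof.
have := @chainPr xpredT (fun _ _ _ => true) (fun _ => 1).
rewrite /Pr big1_eq => -> //.
  move=> j p jt _; exact: step_total (cardA0 p jt).
by move=> om; apply/esym/forallP.
Qed.

Lemma partb (j0 : 'I_t) (i0 : 'I_k) (v : 'I_n) :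
  Pr S R [pred om | Zof S om j0 i0 == v] = n%:R^-1.
Proof.
rewrite (@chainPr _ (fun j p w => if j == j0 then zstep (S j (Xseq S p)) w i0 == v else true)
   (fun j => if j == j0 then n%:R^-1 else 1)).
- rewrite (bigD1 j0) //= eqxx big1 ?mulr1 // => j Hj.
  by rewrite ifF //; exact: (negbTE Hj).
- move=> j p jt _; case: eqP => [Ej|_].
    exact: step_z1 (cardA0 p jt) i0 v.
  exact: step_total (cardA0 p jt).
- move=> om /=; apply/idP/forallP => [H j|H].
    case: eqP => // Hj; have Ej : j = j0 by apply: val_inj.
    by move: H; rewrite /Zof /hist -Xseq_take Ej.
  by have := H j0; rewrite eqxx /Zof /hist -Xseq_take.
Qed.



Lemma partc (z : 'I_t -> 'I_k -> 'I_n) :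
  Pr S R [pred om | [forall j, forall i, Zof S om j i == z j i]]
  = \prod_(j < t) \prod_(i < k) Pr S R [pred om | Zof S om j i == z j i].
Proof.
pose z' := fun (j : nat) (i : 'I_k) =>
  if @insub _ (fun x => (x < t)%N) 'I_t j is Some j' then z j' i else Ordinal n0.
rewrite (@chainPr _ (fun j p w => [forall i, zstep (S j (Xseq S p)) w i == z' j i])
   (fun j => n%:R^-1 ^+ k)).
- apply: eq_bigr => j _.
  by rewrite (eq_bigr (fun _ => n%:R^-1)) ?prodr_const ?card_ord // => i _; rewrite partb.
- by move=> j p jt _; exact: step_zall (cardA0 p jt) (z' j).
- move=> om /=; apply: eq_forallb => j; apply: eq_forallb => i.
  by rewrite /Zof /hist -Xseq_take /z' valK.
Qed.

Lemma parta (x : t.-tuple 'I_n) :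
  @Pr n k t S R [pred om | [forall j, Xof S om j == tnth x j]] = adaptive_pmf S R x.
Proof.
pose x0 := Ordinal n0.
rewrite (@chainPr _ (fun j p w => xstep (S j (Xseq S p)) w == nth x0 x j)
   (fun j => if nth x0 x j \in S j (take j x) then #|S j (take j x)|%:R^-1 else 0)).
- by rewrite /adaptive_pmf; apply: eq_bigr => j _; rewrite (tnth_nth x0).
- move=> j p jt Hall.
  have EX : Xseq S p = take j x.
    apply: (@eq_from_nth _ x0).
      by rewrite size_Xseq size_tuple size_takel // size_tuple ltnW.
    move=> i; rewrite size_Xseq size_tuple => hi.
    rewrite nth_take // (nth_Xseq S x0 (tnth p (Ordinal hi))) ?size_tuple //.
    move/forallP: Hall => /(_ (Ordinal hi)) /eqP /= <-.
    by rewrite [in RHS](tnth_nth (tnth p (Ordinal hi))).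
  have A0 : (0 < #|S j (take j x)|)%N.
    by rewrite HS // size_takel // size_tuple ltnW.
  rewrite /G EX; exact: step_x A0 (nth x0 x j).
- move=> om /=; apply: eq_forallb => j.
  by rewrite /Xof /hist -Xseq_take (tnth_nth x0).
Qed.



Lemma partd (sigma : R) : (0 < t)%N -> sigma * n%:R = m%:R ->
  1 - t%:R * (1 - sigma) ^+ k
  <= @Pr n k t S R [pred om | [forall j, exists j', exists i,
                            Xof S om j == Zof S om j' i]].
Proof.
move=> t0 Hsig.
pose eg := fun j (p : seq (step n k)) (w : step n k) => stY w (stc w) \in S j (Xseq S p).
pose Eg := [pred om : t.-tuple (step n k) | [forall j : 'I_t, eg j (take j om) (tnth om j)]].
have mn : (m <= n)%N.
  rewrite -(HS (h := [::]) t0) //.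
  by rewrite -[n in (_ <= n)%N]card_ord max_card.
have hs : n%:R^-1 * (n - m)%:R = 1 - sigma :> R.
  rewrite natrB // -Hsig.
  have nz : (n%:R : R) != 0 by rewrite pnatr_eq0 -lt0n.
  by field.
have bad : forall j0 : 'I_t,
    @Pr n k t S R [pred om : t.-tuple (step n k) | ~~ eg j0 (take j0 om) (tnth om j0)] = (1 - sigma) ^+ k.
  move=> j0.
  rewrite (@chainPr _ (fun j p w => if j == j0 then ~~ eg j p w else true)
     (fun j => if j == j0 then (1 - sigma) ^+ k else 1)).
  - rewrite (bigD1 j0) //= eqxx big1 ?mulr1 // => j Hj.
    by rewrite ifF //; exact: (negbTE Hj).
  - move=> j p jt _; case: eqP => [Ej|_]; last exact: step_total (cardA0 p jt).
    rewrite /G /eg.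
    have := step_bad R k0 (cardA0 p jt).
    by rewrite card_A // hs.
  - move=> om /=; apply/idP/forallP => [H j|H].
      case: eqP => // Hj; have Ej : j = j0 by apply: val_inj.
      by rewrite Ej.
    by have := H j0; rewrite eqxx.
have le1 : @Pr n k t S R Eg <= @Pr n k t S R [pred om | [forall j, exists j', exists i,
                            Xof S om j == Zof S om j' i]].
  rewrite /Pr [X in X <= _]big_mkcond [X in _ <= X]big_mkcond /=; apply: ler_sum => om _.
  case: ifP => hg; last by case: ifP => _; rewrite ?weight_ge0.
  suff -> : [forall j, exists j', exists i, Xof S om j == Zof S om j' i] by [].
  apply/forallP => j; apply/existsP; exists j; apply/existsP; exists (stc (tnth om j)).
  move/forallP: hg => /(_ j); rewrite /eg /Xof /Zof /hist -Xseq_take => Hc.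
  rewrite /xstep /zstep Hc.
  have -> : [exists i, stY (tnth om j) i \in S j (Xseq S (take j om))].
    by apply/existsP; exists (stc (tnth om j)).
  by [].
have eq2 : @Pr n k t S R Eg = 1 - @Pr n k t S R (predC Eg).
  by rewrite -(total) (bigID Eg) /= addrK.
have le3 : @Pr n k t S R (predC Eg) <=
    \sum_(j0 < t) @Pr n k t S R [pred om : t.-tuple (step n k) | ~~ eg j0 (take j0 om) (tnth om j0)].
  rewrite /Pr big_mkcond /= (eq_bigr (fun j0 : 'I_t => \sum_(om : t.-tuple (step n k))
      if ~~ eg j0 (take j0 om) (tnth om j0) then weight S R om else 0)); last first.
    by move=> j0 _; rewrite big_mkcond.
  rewrite exchange_big /=; apply: ler_sum => om _.
  case: ifP => hg; last first.
    by apply: sumr_ge0 => j _; case: ifP => _; rewrite ?weight_ge0.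
  move: hg; rewrite negb_forall => /existsP [j Hj].
  rewrite (bigD1 j) //= Hj lerDl.
  by apply: sumr_ge0 => j' _; case: ifP => _; rewrite ?weight_ge0.
rewrite (eq_bigr (fun _ => (1 - sigma) ^+ k)) in le3; last by move=> j _; exact: bad.
rewrite sumr_const card_ord -mulr_natl in le3.
apply: le_trans le1; rewrite eq2 lerB //.
Qed.

End Main.

Unset Implicit Arguments.

Theorem mainTheorem3 (R : realFieldType) (n t k m : nat) (sigma alpha : R)
    (S : nat -> seq 'I_n -> {set 'I_n}) :
  (0 < n)%N -> (0 < t)%N ->
  0 < sigma -> sigma <= 1 -> sigma * n%:R = m%:R ->
  0 < alpha -> alpha / sigma = k%:R -> (0 < k)%N ->
  (forall (j : nat) (h : seq 'I_n), (j < t)%N -> size h = j -> #|S j h| = m) ->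
  [/\ (* (a) *)
      forall x : t.-tuple 'I_n,
        @Pr n k t S R [pred om | [forall j, @Xof n k t S om j == tnth x j]]
        = @adaptive_pmf n t S R x,
      (* (b) *)
      forall (j : 'I_t) (i : 'I_k) (v : 'I_n),
        @Pr n k t S R [pred om | @Zof n k t S om j i == v] = n%:R^-1,
      (* (c) *)
      forall z : 'I_t -> 'I_k -> 'I_n,
        @Pr n k t S R [pred om | [forall j, forall i, @Zof n k t S om j i == z j i]]
        = \prod_(j < t) \prod_(i < k) @Pr n k t S R [pred om | @Zof n k t S om j i == z j i]
    & (* (d) *)
      1 - t%:R * (1 - sigma) ^+ k
      <= @Pr n k t S R [pred om | [forall j, exists j', exists i,
                            @Xof n k t S om j == @Zof n k t S om j' i]] ].
Proof.
move=> n0 t0 s0 s1 Hsig a0 ak k0 HS.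
have m0 : (0 < m)%N by rewrite -(ltr0n R) -Hsig mulr_gt0 // ltr0n.
split.
- move=> x; apply: parta; [exact: n0 | exact: k0 | exact: m0 | exact: HS].
- move=> j i v; apply: partb; [exact: n0 | exact: k0 | exact: m0 | exact: HS].
- move=> z; apply: partc; [exact: n0 | exact: k0 | exact: m0 | exact: HS].
- apply: partd; [exact: n0 | exact: k0 | exact: m0 | exact: HS | exact: t0 | exact: Hsig].
Qed.
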